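(* For every regular language $L\subseteq\Sigma^*$, the map \[\mathrm{dr}_L\colon [\mathrm{LQ}(L^r)]^{\mathsf{op}}\to\mathrm{LQ}(L),\qquad K\mapsto \big(\overline{K^r}\big)^{-1}L,\] is a well-defined isomorphism of $\mathbf{JSL}$-dfas; i.e., the minimal $\mathbf{JSL}$-dfas of $L$ and $L^r$ are dual to each other.
   Context: For $u\in\Sigma^*$, $u^{-1}L=\{w:uw\in L\}$; for $U\subseteq\Sigma^*$, $U^{-1}L=\bigcup_{u\in U}u^{-1}L$. $\overline{K}=\Sigma^*\setminus K$, $K^r=\{w^r:w\in K\}$ where $w^r$ is the reversal of $w$. $\mathrm{LQ}(L)$ is the $\mathbf{JSL}$-dfa whose states are all finite unions (including $\emptyset$) of left derivatives $u^{-1}L$, ordered by inclusion, with transitions $K\mapsto a^{-1}K$, initial state $L$, and final states those $K$ with $\epsilon\in K$. A $\mathbf{JSL}$-dfa is a finite semilattice $S$ with join-preserving transitions $\delta_a$, an initial state $s_0$, and final states $F=\{s:s\not\le s_f\}$ for some $s_f$; morphisms are join-preserving maps preserving transitions, initial state and final states (both ways). The dual $A^{\mathsf{op}}$ has states $S$ with reversed order, transitions $\delta_a^*(s)=$ largest $t$ with $\delta_a(t)\le s$, initial state the largest non-final state of $A$, final states $\{s: s_0\not\le s\}$. *)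

(* Defs.v *)
From mathcomp Require Import all_boot.
From Stdlib Require Import ClassicalEpsilon.
From Stdlib Require List.

Set Implicit Arguments.
Unset Strict Implicit.
Unset Printing Implicit Defensive.

Section Lang.
Variable Sigma : Type.

Definition word := seq Sigma.
Definition lang := word -> Prop.

Definition deriv (u : word) (L : lang) : lang := fun w => L (u ++ w).

Definition rev_lang (K : lang) : lang := fun w => K (rev w).
Definition compl_lang (K : lang) : lang := fun w => ~ K w.

Definition lquot (U : lang) (L : lang) : lang :=
  fun w => exists u, U u /\ deriv u L w.

Definition dr (L K : lang) : lang := lquot (compl_lang (rev_lang K)) L.

Definition is_LQ (L K : lang) : Prop :=
  exists U : seq word, forall w, K w <-> exists u, List.In u U /\ deriv u L w.

End Lang.

Definition regular (Sigma : finType) (L : lang Sigma) : Prop :=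
  exists (Q : finType) (d : Q -> Sigma -> Q) (q0 : Q) (F : pred Q),
    forall w, L w <-> F (foldl d q0 w).

Record jsl_dfa (Sigma : Type) := JSLdfa {
  jst : Type;
  jle : jst -> jst -> Prop;
  jjoin : jst -> jst -> jst;
  jbot : jst;
  jdelta : Sigma -> jst -> jst;
  jinit : jst;
  jfinal : jst -> Prop }.

Arguments jst {Sigma}.
Arguments jle {Sigma} _ _ _.
Arguments jjoin {Sigma} _ _ _.
Arguments jbot {Sigma}.
Arguments jdelta {Sigma} _ _ _.
Arguments jinit {Sigma}.
Arguments jfinal {Sigma} _ _.

Definition is_jsl_dfa (Sigma : Type) (A : jsl_dfa Sigma) : Prop :=
  (exists s : seq (jst A), forall x, List.In x s) /\
  (forall x, jle A x x) /\
  (forall x y, jle A x y -> jle A y x -> x = y) /\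
  (forall x y z, jle A x y -> jle A y z -> jle A x z) /\
  (forall x y z, jle A (jjoin A x y) z <-> (jle A x z /\ jle A y z)) /\
  (forall x, jle A (jbot A) x) /\
  (forall a x y, jdelta A a (jjoin A x y) = jjoin A (jdelta A a x) (jdelta A a y)) /\
  (forall a, jdelta A a (jbot A) = jbot A) /\
  (exists sf, forall s, jfinal A s <-> ~ jle A s sf).

Definition is_greatest (T : Type) (le : T -> T -> Prop) (P : T -> Prop) (x : T) :=
  P x /\ forall y, P y -> le y x.

(* The dual JSL-dfa A^op: reversed order (so join = meet of A, bottom =
   top of A), delta*_a(s) = largest t with delta_a(t) <= s, initial state
   the largest non-final state of A, final states {s | ~ s0 <= s}. *)
Definition dual (Sigma : Type) (A : jsl_dfa Sigma) : jsl_dfa Sigma :=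
  let inh := inhabits (jinit A) in
  {| jst := jst A;
     jle := fun x y => jle A y x;
     jjoin := fun x y => epsilon inh
                (is_greatest (jle A) (fun z => jle A z x /\ jle A z y));
     jbot := epsilon inh (is_greatest (jle A) (fun _ => True));
     jdelta := fun a s => epsilon inh
                (is_greatest (jle A) (fun t => jle A (jdelta A a t) s));
     jinit := epsilon inh (is_greatest (jle A) (fun t => ~ jfinal A t));
     jfinal := fun s => ~ jle A (jinit A) s |}.

Definition jsl_morph (Sigma : Type) (A B : jsl_dfa Sigma) (f : jst A -> jst B) :=
  (forall x y, f (jjoin A x y) = jjoin B (f x) (f y)) /\
  f (jbot A) = jbot B /\
  (forall a x, f (jdelta A a x) = jdelta B a (f x)) /\
  f (jinit A) = jinit B /\
  (forall x, jfinal A x <-> jfinal B (f x)).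

Definition jsl_iso (Sigma : Type) (A B : jsl_dfa Sigma) (f : jst A -> jst B) :=
  jsl_morph f /\ exists g : jst B -> jst A, jsl_morph g /\ cancel f g /\ cancel g f.

Section LQ.
Variables (Sigma : Type) (L : lang Sigma).

Definition LQst := {K : lang Sigma | is_LQ L K}.

Lemma is_LQ_union (K1 K2 : lang Sigma) :
  is_LQ L K1 -> is_LQ L K2 -> is_LQ L (fun w => K1 w \/ K2 w).
Proof.
move=> [U1 H1] [U2 H2]; exists (U1 ++ U2) => w.
rewrite H1 H2; split.
- case=> [[u [Hu Hw]]|[u [Hu Hw]]]; exists u; split=> //;
    apply List.in_or_app; auto.
- case=> u [Hu Hw]; case: (List.in_app_or _ _ _ Hu) => Hu'; [left|right];
    by exists u.
Qed.

Lemma is_LQ_empty : is_LQ L (fun _ => False).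
Proof. by exists [::] => w; split=> // -[u []]. Qed.

Lemma is_LQ_deriv (a : Sigma) (K : lang Sigma) :
  is_LQ L K -> is_LQ L (deriv [:: a] K).
Proof.
move=> [U H]; exists (map (fun u => u ++ [:: a]) U) => w.
rewrite /deriv /= H; split.
- case=> u [Hu Hw]; exists (u ++ [:: a]); split; last by rewrite -catA.
  exact: (List.in_map (fun u => u ++ [:: a]) U u Hu).
- case=> v [Hv Hw]; case: (proj1 (List.in_map_iff _ _ _) Hv) => u [Hvu Hu].
  exists u; split=> //; move: Hw; rewrite -Hvu /deriv -catA //.
Qed.

Lemma is_LQ_L : is_LQ L L.
Proof.
exists [:: [::]] => w; split.
- by move=> Hw; exists [::]; split=> //; left.
- by case=> u [[<-|[]] Hw].
Qed.

Definition LQ : jsl_dfa Sigma :=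
  {| jst := LQst;
     jle := fun K1 K2 => forall w, proj1_sig K1 w -> proj1_sig K2 w;
     jjoin := fun K1 K2 => exist _ _ (is_LQ_union (proj2_sig K1) (proj2_sig K2));
     jbot := exist _ _ is_LQ_empty;
     jdelta := fun a K => exist _ _ (is_LQ_deriv a (proj2_sig K));
     jinit := exist _ _ is_LQ_L;
     jfinal := fun K => proj1_sig K [::] |}.

End LQ.

(* Main.v *)
Require Import Defs.
From mathcomp Require Import all_boot.
From Stdlib Require Import ClassicalEpsilon Classical FunctionalExtensionality PropExtensionality.
From Stdlib Require List.

Set Implicit Arguments.
Unset Strict Implicit.
Unset Printing Implicit Defensive.

Lemma InP (T : eqType) (x : T) (s : seq T) : List.In x s <-> x \in s.
Proof.
elim: s => [|y s IH] //=; rewrite in_cons; split.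
- by case=> [->|/IH ->]; rewrite ?eqxx ?orbT.
- by case/orP=> [/eqP ->|/IH]; [left|right].
Qed.

Lemma In_map_seq (A B : Type) (f : A -> B) (x : A) (s : seq A) :
  List.In x s -> List.In (f x) (map f s).
Proof. elim: s => [|y s IH] //= [->|/IH]; by [left|right]. Qed.

Lemma lang_ext (Sigma : Type) (K1 K2 : lang Sigma) :
  (forall w, K1 w <-> K2 w) -> K1 = K2.
Proof.
move=> H; apply: functional_extensionality => w;
apply: propositional_extensionality; exact: H.
Qed.

Lemma LQ_eq (Sigma : Type) (M : lang Sigma) (x y : LQst M) :
  proj1_sig x = proj1_sig y -> x = y.
Proof.
case: x => [K1 p1]; case: y => [K2 p2] /= E; subst K2; f_equal;
apply: proof_irrelevance.
Qed.

Lemma LQ_repr (Sigma : Type) (M : lang Sigma) (x : LQst M) :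
  exists P, proj1_sig x = lquot P M.
Proof.
case: x => K [U HU] /=; exists (fun u => List.In u U); apply: lang_ext => w.
exact: HU.
Qed.

Lemma LQ_anti (Sigma : Type) (M : lang Sigma) (x y : LQst M) :
  jle (LQ M) x y -> jle (LQ M) y x -> x = y.
Proof.
by move=> H1 H2; apply: LQ_eq; apply: lang_ext => w; split; [exact: H1|exact: H2].
Qed.

Lemma eps_eq (T : Type) (inh : inhabited T) (le : T -> T -> Prop) (P : T -> Prop)
  (g0 : T) :
  (forall x y, le x y -> le y x -> x = y) -> is_greatest le P g0 ->
  epsilon inh (is_greatest le P) = g0.
Proof.
move=> anti Hg.
have := epsilon_spec inh (is_greatest le P) (ex_intro _ g0 Hg).
case=> [P1 H1]; case: Hg => [P0 H0]; apply: anti; [exact: H0|exact: H1].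
Qed.

Lemma drdr (Sigma : Type) (M t : lang Sigma) :
  is_LQ (rev_lang M) t -> forall v, dr (rev_lang M) (dr M t) v <-> t v.
Proof.
move=> [U HU] v; split.
- case=> y [Hy Mv]; apply: NNPP => tv; apply: Hy; exists (rev v); split.
  + by rewrite /compl_lang /rev_lang revK.
  + by move: Mv; rewrite /deriv /rev_lang rev_cat.
- move=> /HU [s [Hs Ms]]; exists s; split; last exact: Ms.
  move=> [u [Hu Mu]]; apply: Hu; apply/HU; exists s; split=> //.
  by rewrite /deriv /rev_lang rev_cat revK.
Qed.

Section Gen.
Variables (Sigma : finType) (M : lang Sigma) (Q : finType) (phi : seq Sigma -> Q).
Hypothesis Hphi : forall u u' w, phi u = phi u' -> M (u ++ w) -> M (u' ++ w).

Definition wit (P : lang Sigma) (q : Q) : option (seq Sigma) :=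
  match excluded_middle_informative (exists u, P u /\ phi u = q) with
  | left H => Some (proj1_sig (constructive_indefinite_description _ H))
  | right _ => None end.

Lemma wit_spec P q u : wit P q = Some u -> P u /\ phi u = q.
Proof.
rewrite /wit; case: excluded_middle_informative => // H [<-].
exact: proj2_sig (constructive_indefinite_description _ H).
Qed.

Lemma wit_some P u : P u -> exists u', wit P (phi u) = Some u'.
Proof.
move=> Pu; rewrite /wit; case: excluded_middle_informative => [H|H].
- by eexists.
- by case: H; exists u.
Qed.

Lemma lquot_LQ P : is_LQ M (lquot P M).
Proof.
exists (pmap (wit P) (enum Q)) => w; split.
- case=> u [Pu Mu]; case: (wit_some Pu) => u' Hw; case: (wit_spec Hw) => Pu' Eq.
  exists u'; split; last exact: (Hphi (esym Eq) Mu).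
  apply/InP; rewrite mem_pmap; apply/mapP; exists (phi u); last by rewrite Hw.
  by rewrite mem_enum.
- case=> u [/InP Hu Mu]; move: Hu; rewrite mem_pmap => /mapP [q _ Hq].
  case: (wit_spec (esym Hq)) => Pu _; by exists u.
Qed.

Definition stS (S : {set Q}) : LQst M :=
  exist _ (lquot (fun u => phi u \in S) M) (lquot_LQ _).

Lemma LQ_fin : exists s : seq (LQst M), forall x, List.In x s.
Proof.
exists (map stS (enum {set Q})) => x.
case: (LQ_repr x) => P HP.
have -> : x = stS [set q | wit P q != None].
  apply: LQ_eq; rewrite HP /=; apply: lang_ext => w; split.
  - case=> u [Pu Mu]; exists u; split=> //; rewrite inE.
    by case: (wit_some Pu) => u' ->.
  - case=> u [Hu Mu]; move: Hu; rewrite inE; case E: (wit P (phi u)) => [u'|] // _.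
    case: (wit_spec E) => Pu' Eq; exists u'; split=> //; exact: (Hphi (esym Eq) Mu).
apply: In_map_seq; apply/InP; by rewrite mem_enum.
Qed.

Definition G (Qp : lang Sigma -> Prop) : LQst M :=
  exist _ (lquot (fun u => Qp (deriv u M)) M) (lquot_LQ _).

Lemma G_greatest Qp
  (HQ : forall P, Qp (lquot P M) <-> forall u, P u -> Qp (deriv u M)) :
  is_greatest (jle (LQ M)) (fun z => Qp (proj1_sig z)) (G Qp).
Proof.
split.
- by apply/HQ.
- move=> z /=; case: (LQ_repr z) => P HP; rewrite HP => /HQ H w [u [Pu Mu]].
  exists u; split=> //; exact: H.
Qed.

Definition meetQ (x y : LQst M) := fun K : lang Sigma =>
  (forall w, K w -> proj1_sig x w) /\ (forall w, K w -> proj1_sig y w).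
Definition topQ := fun _ : lang Sigma => True.
Definition dstarQ a (s : LQst M) := fun K : lang Sigma =>
  forall w, deriv [:: a] K w -> proj1_sig s w.
Definition initQ := fun K : lang Sigma => ~ K [::].

Lemma meet_HQ x y P :
  meetQ x y (lquot P M) <-> forall u, P u -> meetQ x y (deriv u M).
Proof.
rewrite /meetQ /lquot; split.
- by move=> [Hx Hy] u Pu; split=> w Mw; [apply: Hx|apply: Hy]; exists u.
- move=> H; split=> w [u [Pu Mu]]; have [Hx Hy] := H u Pu; [exact: Hx|exact: Hy].
Qed.

Lemma top_HQ P : topQ (lquot P M) <-> forall u, P u -> topQ (deriv u M).
Proof. by []. Qed.

Lemma dstar_HQ a s P :
  dstarQ a s (lquot P M) <-> forall u, P u -> dstarQ a s (deriv u M).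
Proof.
rewrite /dstarQ /lquot /deriv /=; split.
- by move=> H u Pu w Mw; apply: H; exists u.
- by move=> H w [u [Pu Mu]]; exact: H u Pu w Mu.
Qed.

Lemma init_HQ P : initQ (lquot P M) <-> forall u, P u -> initQ (deriv u M).
Proof.
rewrite /initQ /lquot; split.
- by move=> H u Pu Mu; apply: H; exists u.
- by move=> H [u [Pu Mu]]; exact: H u Pu Mu.
Qed.

Lemma dual_join x y : jjoin (dual (LQ M)) x y = G (meetQ x y).
Proof.
apply: eps_eq; first exact: LQ_anti.
exact: (@G_greatest (meetQ x y) (meet_HQ x y)).
Qed.

Lemma dual_bot : jbot (dual (LQ M)) = G topQ.
Proof.
apply: eps_eq; first exact: LQ_anti.
exact: (@G_greatest topQ top_HQ).
Qed.

Lemma dual_delta a s : jdelta (dual (LQ M)) a s = G (dstarQ a s).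
Proof.
apply: eps_eq; first exact: LQ_anti.
exact: (@G_greatest (dstarQ a s) (dstar_HQ a s)).
Qed.

Lemma dual_init : jinit (dual (LQ M)) = G initQ.
Proof.
apply: eps_eq; first exact: LQ_anti.
exact: (@G_greatest initQ init_HQ).
Qed.

Lemma dual_leE (x y : LQst M) :
  jle (dual (LQ M)) x y = (forall w, proj1_sig y w -> proj1_sig x w).
Proof. by []. Qed.

Lemma LQ_jsl : is_jsl_dfa (LQ M).
Proof.
split; first exact: LQ_fin.
split; first by move=> x w.
split; first exact: LQ_anti.
split; first by move=> x y z H1 H2 w /H1 /H2.
split.
  move=> x y z /=; split.
  - by move=> H; split=> w Hw; apply: H; [left|right].
  - by case=> H1 H2 w [/H1|/H2].
split; first by move=> x w.
split; first by move=> a x y; apply: LQ_eq.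
split; first by move=> a; apply: LQ_eq.
exists (G initQ) => s /=; split.
- move=> Hs Hle; case: (Hle _ Hs) => u [Hu Mu]; exact: Hu Mu.
- move=> H; apply: NNPP => Hs; apply: H; case: (LQ_repr s) => P HP.
  rewrite HP in Hs *; move=> w [u [Pu Mu]]; exists u; split=> // Mu0.
  by apply: Hs; exists u.
Qed.

End Gen.

Lemma morph_inv (Sigma : Type) (A B : jsl_dfa Sigma) (f : jst A -> jst B)
  (g : jst B -> jst A) :
  jsl_morph f -> cancel f g -> cancel g f -> jsl_morph g.
Proof.
move=> [fJ [fB [fD [fI fF]]]] fK gK.
split.
  move=> x y; have := fJ (g x) (g y); rewrite !gK => <-; by rewrite fK.
split; first by rewrite -fB fK.
split; first by move=> a x; rewrite -{1}(gK x) -fD fK.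
split; first by rewrite -fI fK.
by move=> x; rewrite fF gK.
Qed.

Section Main.
Variables (Sigma : finType) (L : lang Sigma) (Q1 : finType) (phi1 : seq Sigma -> Q1).
Hypothesis H1 : forall u u' w, phi1 u = phi1 u' -> L (u ++ w) -> L (u' ++ w).
Variables (Q2 : finType) (phi2 : seq Sigma -> Q2).
Hypothesis H2 : forall u u' w, phi2 u = phi2 u' ->
  rev_lang L (u ++ w) -> rev_lang L (u' ++ w).

Definition fD (x : LQst (rev_lang L)) : LQst L :=
  exist _ (dr L (proj1_sig x)) (lquot_LQ H1 _).
Definition gD (X : LQst L) : LQst (rev_lang L) :=
  exist _ (dr (rev_lang L) (proj1_sig X)) (lquot_LQ H2 _).

Lemma revrev : rev_lang (rev_lang L) = L.
Proof. by apply: lang_ext => w; rewrite /rev_lang revK. Qed.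

Lemma fK : cancel fD gD.
Proof.
move=> x; apply: LQ_eq; apply: lang_ext => v /=; apply: drdr; exact: proj2_sig x.
Qed.

Lemma gK : cancel gD fD.
Proof.
move=> X; apply: LQ_eq; apply: lang_ext => v /=.
have := @drdr _ (rev_lang L) (proj1_sig X); rewrite revrev => H; apply: H.
exact: proj2_sig X.
Qed.

Let D := dual (LQ (rev_lang L)).

Lemma f_join x y : fD (jjoin D x y) = jjoin (LQ L) (fD x) (fD y).
Proof.
rewrite /D (dual_join H2); apply: LQ_eq; apply: lang_ext => w /=.
rewrite /meetQ /dr /lquot /compl_lang /rev_lang /deriv /=; split.
- case=> u [Hu Lu]; apply: NNPP => H; apply: Hu; exists (rev w); split;
    last by rewrite rev_cat !revK.
  split=> z Hz; apply: NNPP => xz; apply: H; [left|right]; exists (rev z);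
    rewrite revK; split=> //; by rewrite rev_cat revK in Hz.
- case=> [[u [Hu Lu]]|[u [Hu Lu]]]; exists u; split=> //;
    move=> [s [[Hx Hy] Ls]]; apply: Hu; [exact: Hx _ Ls|exact: Hy _ Ls].
Qed.

Lemma f_bot : fD (jbot D) = jbot (LQ L).
Proof.
rewrite /D (dual_bot H2); apply: LQ_eq; apply: lang_ext => w /=; split=> //.
case=> u [Hu Lu]; apply: Hu; exists (rev w); split=> //.
by rewrite /deriv /rev_lang rev_cat !revK.
Qed.

Lemma f_delta a x : fD (jdelta D a x) = jdelta (LQ L) a (fD x).
Proof.
rewrite /D (dual_delta H2); apply: LQ_eq; apply: lang_ext => w /=.
rewrite /dstarQ /dr /lquot /compl_lang /rev_lang /deriv /=; split.
- case=> u [Hu Lu]; apply: NNPP => H; apply: Hu; exists (rev w); split;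
    last by rewrite rev_cat !revK.
  move=> z Hz; apply: NNPP => xz; apply: H; exists (rev z); rewrite revK; split=> //.
  by rewrite rev_cat revK rev_cons cat_rcons in Hz.
- case=> u [Hu Lu]; exists (rcons u a); split; last by rewrite cat_rcons.
  move=> [s [Hs Ls]]; apply: Hu; apply: Hs; by rewrite rev_rcons in Ls.
Qed.

Lemma f_init : fD (jinit D) = jinit (LQ L).
Proof.
rewrite /D (dual_init H2); apply: LQ_eq; apply: lang_ext => w /=.
rewrite /initQ /dr /lquot /compl_lang /rev_lang /deriv /=; split.
- case=> u [Hu Lu]; apply: NNPP => Lw; apply: Hu; exists (rev w); split.
  + by rewrite cats0 revK.
  + by rewrite rev_cat !revK.
- move=> Lw; exists [::]; split=> //; move=> [s [Hs Ls]]; exact: Hs Ls.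
Qed.

Lemma f_final x : jfinal D x <-> jfinal (LQ L) (fD x).
Proof.
rewrite /D /=; rewrite /dr /lquot /compl_lang /rev_lang /deriv /=; split.
- move=> H; apply: NNPP => H'; apply: H => w Lw; apply: NNPP => xw; apply: H'.
  exists (rev w); rewrite revK cats0; split=> //.
- move=> [u [Hu Lu]] H; apply: Hu; apply: H; by rewrite revK -(cats0 u).
Qed.

Lemma f_morph : jsl_morph (fD : jst D -> jst (LQ L)).
Proof.
split; first exact: f_join.
split; first exact: f_bot.
split; first exact: f_delta.
split; first exact: f_init.
exact: f_final.
Qed.

Lemma dual_jsl : is_jsl_dfa D.
Proof.
split; first by case: (LQ_fin H2) => s Hs; exists s.
split; first by move=> x; rewrite /D /dual /= => w.
split; first by move=> x y Hxy Hyx; apply: LQ_anti.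
split; first by move=> x y z; rewrite /D /dual /= => Hxy Hyz w Hw; exact: Hxy _ (Hyz _ Hw).
split.
  move=> x y z; rewrite /D (dual_join H2) !dual_leE.
  have [[Hx Hy] Hg] := @G_greatest _ _ _ _ H2 (meetQ x y) (meet_HQ x y).
  split.
  - by move=> H; split=> w /H Hw; [exact: Hx _ Hw|exact: Hy _ Hw].
  - by move=> [Hzx Hzy]; apply: Hg; split.
split.
  move=> x; rewrite /D (dual_bot H2) dual_leE.
  have [_ Hg] := @G_greatest _ _ _ _ H2 (@topQ _) (@top_HQ _ (rev_lang L)).
  by apply: Hg.
split.
  move=> a x y; apply: (can_inj fK).
  rewrite f_delta !f_join !f_delta; by apply: LQ_eq.
split.
  by move=> a; apply: (can_inj fK); rewrite f_delta f_bot; apply: LQ_eq.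
by exists (jinit (LQ (rev_lang L))).
Qed.

End Main.

Theorem proposition3p9 (Sigma : finType) (L : lang Sigma) :
  regular L ->
  is_jsl_dfa (LQ L) /\ is_jsl_dfa (dual (LQ (rev_lang L))) /\
  exists f : jst (dual (LQ (rev_lang L))) -> jst (LQ L),
    (forall K w, proj1_sig (f K) w <-> dr L (proj1_sig K) w) /\
    jsl_iso f.
Proof.
case=> Q [d [q0 [F HL]]].
have H1 : forall u u' w, foldl d q0 u = foldl d q0 u' -> L (u ++ w) -> L (u' ++ w).
  by move=> u u' w E /HL Hu; apply/HL; move: Hu; rewrite !foldl_cat E.
have H2 : forall u u' w,
    [set q | F (foldl d q (rev u))] = [set q | F (foldl d q (rev u'))] ->
    rev_lang L (u ++ w) -> rev_lang L (u' ++ w).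
  move=> u u' w E; rewrite /rev_lang => /HL Hu; apply/HL; move: Hu.
  rewrite !rev_cat !foldl_cat => Hu.
  have : foldl d q0 (rev w) \in [set q | F (foldl d q (rev u))] by rewrite inE.
  by rewrite E inE.
split; first exact: (LQ_jsl H1).
split; first exact: (dual_jsl H1 H2).
exists (fD H1); split; first by [].
split; first exact: (f_morph H1 H2).
exists (gD H2); split.
- apply: morph_inv; [exact: (f_morph H1 H2)|exact: (fK H1 H2)|exact: (gK H1 H2)].
- by split; [exact: (fK H1 H2)|exact: (gK H1 H2)].
Qed.
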